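(* Let $b_{10}>0$, $b_{11}\ge0$, $c_{01}\ge0$, $c_{11}\ge0$, and define $\gamma'=\frac{c_{01}}{b_{10}}$, $\delta'=\frac{b_{10}-b_{11}+c_{11}-c_{01}}{b_{10}}$. Let $\mathcal{F}=\{(P_{11},t): P_{11}\in[0,1],\ P_{11}-1\le t\le P_{11}\}$ and $\mathcal{P}=\{(P_{11},t)\in\mathcal{F}: t>\gamma'+\delta'P_{11}\}$. Then $\mathcal{P}\neq\emptyset$ if and only if $c_{11}<b_{11}$.
   Context: Double binary causal classification: $P_{11}$ is the probability of the positive outcome under the positive treatment, $t=P_{11}-P_{10}$ the estimated individual treatment effect, $b_{ij}$ the benefit of outcome $i$ under treatment $j$ and $c_{ij}$ the cost of outcome $i$ under treatment $j$, normalized so that $c_{00}=c_{10}=0$, $b_{00}=b_{01}=0$. The cost-sensitive causal decision boundary (equality of expected profits of the two treatments) is then $t=\gamma'+\delta'P_{11}$, and $\mathcal{P}$ is the positive treatment set. *)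

(* Defs.v *)
From Stdlib Require Import Reals.
Open Scope R_scope.

Definition gamma' (b10 c01 : R) : R := c01 / b10.

Definition delta' (b10 b11 c01 c11 : R) : R := (b10 - b11 + c11 - c01) / b10.

Definition feasible (p11 t : R) : Prop :=
  0 <= p11 <= 1 /\ p11 - 1 <= t <= p11.

Definition pos_treat (b10 b11 c01 c11 : R) (p11 t : R) : Prop :=
  feasible p11 t /\ t > gamma' b10 c01 + delta' b10 b11 c01 c11 * p11.

(* Main.v *)
Require Import Defs.
From Stdlib Require Import Reals Lra Psatz.
Open Scope R_scope.

Theorem theorem2 (b10 b11 c01 c11 : R)
  (hb10 : 0 < b10) (hb11 : 0 <= b11) (hc01 : 0 <= c01) (hc11 : 0 <= c11) :
  (exists p11 t : R, pos_treat b10 b11 c01 c11 p11 t) <-> c11 < b11.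
Proof.
  assert (E : forall p, gamma' b10 c01 + delta' b10 b11 c01 c11 * p
                = (c01 + (b10 - b11 + c11 - c01) * p) / b10).
  { intro p; unfold gamma', delta'; field; lra. }
  split.
  - intros [p [t [[[hp0 hp1] [ht0 ht1]] H]]].
    rewrite E in H.
    apply Rlt_gt in H.
    assert (H2 : c01 + (b10 - b11 + c11 - c01) * p < t * b10).
    { apply (Rmult_lt_reg_r (/ b10)). apply Rinv_0_lt_compat; lra.
      replace (t * b10 * / b10) with t by (field; lra). exact H. }
    nra.
  - intro h. exists 1, 1. split.
    + unfold feasible; lra.
    + rewrite E. apply Rlt_gt.
      apply (Rmult_lt_reg_r b10); [lra|].
      replace ((c01 + (b10 - b11 + c11 - c01) * 1) / b10 * b10)
        with (b10 - b11 + c11) by (field; lra). lra.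
Qed.
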